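(* Let $G$ be a graph and $k\ge\Delta(G)$. If every block of $G$ is strongly $k$-edge-orientable, then $G$ is strongly $k$-edge-orientable.
   Context: All graphs are simple. A block is a maximal $2$-connected subgraph. An orientation of a graph $H$ is any digraph obtained by replacing each edge $uv$ with the arc $(u,v)$, with the arc $(v,u)$, or with both arcs. A kernel of a digraph $D$ is an independent set $S$ such that every vertex of $D-S$ has an out-neighbor in $S$. $D$ is kernel-perfect if every induced subdigraph of $D$ has a kernel. For $f:V(H)\to\mathbb{N}$, an orientation $D$ of $H$ is $f$-kernel-perfect if it is kernel-perfect and $f(v)\ge 1+d^+_D(v)$ for all $v$. For $f:E(G)\to\mathbb{N}$, $G$ is $f$-edge-orientable if its line graph $L(G)$ admits an $f$-kernel-perfect orientation. For $v\in V(G)$, define $f_{k,v}:E(G)\to\mathbb{N}$ by $f_{k,v}(e)=d_G(v)$ if $e$ is incident to $v$, and $f_{k,v}(e)=k$ otherwise. $G$ is strongly $k$-edge-orientable if $G$ is $f_{k,v}$-edge-orientable for every $v\in V(G)$. *)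

(* Defs.v *)
(* A simple graph is a symmetric irreflexive relation
   e : rel T on a finite type T.  We work with induced subgraphs G[V]
   for V : {set T}; the whole graph is G[setT]. *)
From mathcomp Require Import all_boot.
Set Implicit Arguments. Unset Strict Implicit. Unset Printing Implicit Defensive.

Section Graphs.
Variable T : finType.

Definition simple_graph (e : rel T) : Prop :=
  symmetric e /\ irreflexive e.

Definition deg (V : {set T}) (e : rel T) (v : T) : nat :=
  #|[set y in V | e v y]|.

Definition edges (V : {set T}) (e : rel T) : {set {set T}} :=
  [set A : {set T} | [exists x in V, exists y in V, e x y && (A == [set x; y])]].

(* adjacency in the line graph: distinct edges sharing an endpoint *)
Definition ladj (A B : {set T}) : bool := (A != B) && (A :&: B != set0).

Definition line_orientation (V : {set T}) (e : rel T) (a : rel {set T}) : Prop :=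
  (forall A B, a A B -> [&& A \in edges V e, B \in edges V e & ladj A B]) /\
  (forall A B, A \in edges V e -> B \in edges V e -> ladj A B -> a A B || a B A).

Definition is_kernel (a : rel {set T}) (W S : {set {set T}}) : Prop :=
  S \subset W /\
  (forall A B, A \in S -> B \in S -> ~~ a A B) /\
  (forall A, A \in W :\: S -> exists2 B, B \in S & a A B).

Definition kernel_perfect (V : {set T}) (e : rel T) (a : rel {set T}) : Prop :=
  forall W : {set {set T}}, W \subset edges V e ->
    exists S : {set {set T}}, is_kernel a W S.

Definition outdeg (V : {set T}) (e : rel T) (a : rel {set T}) (A : {set T}) : nat :=
  #|[set B in edges V e | a A B]|.

Definition f_kernel_perfect (V : {set T}) (e : rel T) (f : {set T} -> nat)
    (a : rel {set T}) : Prop :=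
  line_orientation V e a /\ kernel_perfect V e a /\
  (forall A, A \in edges V e -> 1 + outdeg V e a A <= f A).

Definition f_edge_orientable (V : {set T}) (e : rel T) (f : {set T} -> nat) : Prop :=
  exists a : rel {set T}, f_kernel_perfect V e f a.

Definition fkv (V : {set T}) (e : rel T) (k : nat) (v : T) (A : {set T}) : nat :=
  if v \in A then deg V e v else k.

Definition strongly_edge_orientable (V : {set T}) (e : rel T) (k : nat) : Prop :=
  forall v, v \in V -> f_edge_orientable V e (fkv V e k v).

(* connectivity of G[S] (vacuous for S empty) *)
Definition connected_in (e : rel T) (S : {set T}) : bool :=
  [forall x in S, forall y in S,
     connect [rel u w | [&& u \in S, w \in S & e u w]] x y].

Definition nonsep (e : rel T) (S : {set T}) : bool :=
  [&& S != set0, connected_in e S & [forall x in S, connected_in e (S :\ x)]].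

(* B is (the vertex set of) a block: a maximal connected subgraph without
   a cut vertex; blocks are induced subgraphs G[B]. *)
Definition is_block (e : rel T) (B : {set T}) : Prop :=
  nonsep e B /\ (forall B' : {set T}, B \subset B' -> nonsep e B' -> B' = B).

End Graphs.

(* Main.v *)
Require Import Defs.
From mathcomp Require Import all_boot.
Set Implicit Arguments. Unset Strict Implicit. Unset Printing Implicit Defensive.

Section Proof.
Variable T : finType.
Variable e : rel T.
Hypothesis esym : symmetric e.
Hypothesis eirr : irreflexive e.

Lemma edgesP (V A : {set T}) : reflect (exists x, exists y, [/\ x \in V, y \in V, e x y & A = [set x; y]]) (A \in edges V e).
Proof.
rewrite inE; apply: (iffP existsP).
- move=> [x /andP [xV /existsP [y /andP [yV /andP [exy /eqP ->]]]]]. by exists x, y.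
- move=> [x [y [xV yV exy ->]]]. exists x; rewrite xV /=; apply/existsP; exists y; by rewrite yV exy eqxx.
Qed.

Lemma edges_sub (V A : {set T}) : A \in edges V e -> A \subset V.
Proof.
move=> /edgesP [x [y [xV yV _ ->]]]; apply/subsetP => z; rewrite !inE.
by case/orP => /eqP ->.
Qed.

Lemma edges_mono (V1 V A : {set T}) : V1 \subset V -> A \in edges V1 e -> A \in edges V e.
Proof.
move=> sV /edgesP [x [y [xV yV exy ->]]]; apply/edgesP; exists x, y.
by rewrite !(subsetP sV).
Qed.

Lemma edges_two (V A : {set T}) : A \in edges V e -> exists x, exists y, [/\ x != y, x \in A & y \in A].
Proof.
move=> /edgesP [x [y [xV yV exy ->]]]; exists x, y; rewrite !inE !eqxx orbT; split=>//.
by apply: contraTneq exy => ->; rewrite eirr.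
Qed.

Lemma edge_not_sub1 (V A : {set T}) c : A \in edges V e -> ~~ (A \subset [set c]).
Proof.
move=> /edges_two [x [y [nxy xA yA]]]; apply/negP => /subsetP sA.
move: (sA x xA) (sA y yA) nxy; rewrite !inE => /eqP -> /eqP ->; by rewrite eqxx.
Qed.

Lemma trivial_fko (V : {set T}) f : (forall A, A \notin edges V e) -> exists a, f_kernel_perfect V e f a.
Proof.
move=> nE; exists [rel A B | false]; split; [|split].
- split=> // A B AE; by rewrite (negPf (nE A)) in AE.
- move=> W sW; exists set0; split; [exact: sub0set | split=> //].
  move=> A; rewrite inE => /andP [_ AW]; move: (subsetP sW A AW); by rewrite (negPf (nE A)).
- move=> A AE; by rewrite (negPf (nE A)) in AE.
Qed.

Lemma deg_mono (V1 V : {set T}) u : V1 \subset V -> deg V1 e u <= deg V e u.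
Proof.
move=> sV; apply: subset_leq_card; apply/subsetP => y; rewrite !inE => /andP [yV ->].
by rewrite (subsetP sV).
Qed.

Lemma fkp_mono (V : {set T}) f g a : (forall A, A \in edges V e -> f A <= g A) ->
  f_kernel_perfect V e f a -> f_kernel_perfect V e g a.
Proof.
move=> fg [lo [kp od]]; split=> //; split=> // A AE; exact: leq_trans (od A AE) (fg A AE).
Qed.

Lemma card_edges_at (W : {set T}) c : #|[set B in edges W e | c \in B]| <= deg W e c.
Proof.
apply: leq_trans (leq_imset_card (fun y => [set c; y]) [set y in W | e c y]).
apply: subset_leq_card; apply/subsetP => B; rewrite inE => /andP [/edgesP [x [y [xW yW exy ->]]] cB].
move: cB; rewrite !inE => /orP [] /eqP ->; apply/imsetP.
- by exists y; rewrite // inE yW exy.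
- by exists x; [rewrite inE xW esym exy | rewrite setUC].
Qed.

Lemma deg_split (V V1 V2 : {set T}) c : V1 \subset V -> V2 \subset V -> V1 :&: V2 \subset [set c] ->
  deg V1 e c + deg V2 e c <= deg V e c.
Proof.
move=> s1 s2 s12; rewrite /deg -cardsUI.
have -> : [set y in V1 | e c y] :&: [set y in V2 | e c y] = set0.
  apply/setP => y; rewrite !inE; apply/negP => /andP [/andP [y1 ey] /andP [y2 _]].
  have : y \in [set c] by apply: (subsetP s12); rewrite inE y1.
  by rewrite inE => /eqP yc; rewrite yc eirr in ey.
rewrite cards0 addn0; apply: subset_leq_card; apply/subsetP => y; rewrite !inE.
case/orP => /andP [yV ->]; rewrite andbT; [exact: (subsetP s1) | exact: (subsetP s2)].
Qed.


Lemma inS (P : pred {set T}) (X : {set {set T}}) B : (B \in [set C in X | P C]) = (B \in X) && P B.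
Proof. by rewrite inE. Qed.

Section Glue.
Variables (k : nat) (V V1 V2 : {set T}) (c v : T) (a1 a2 : rel {set T}).
Hypotheses (s1 : V1 \subset V) (s2 : V2 \subset V) (sU : V \subset V1 :|: V2)
  (s12 : V1 :&: V2 \subset [set c])
  (cross : forall x y, x \in V -> y \in V -> e x y ->
     (x \in V1) && (y \in V1) || (x \in V2) && (y \in V2))
  (dc : deg V e c <= k) (vV1 : v \in V1)
  (h1 : f_kernel_perfect V1 e (fkv V1 e k v) a1)
  (h2 : f_kernel_perfect V2 e (fkv V2 e k c) a2).

Let E1 := edges V1 e.
Let E2 := edges V2 e.

Definition ga : rel {set T} := [rel A B | [|| a1 A B, a2 A B,
  [&& A \in E2, B \in E1, c \in A & c \in B] |
  [&& c == v, A \in E1, B \in E2, c \in A & c \in B]]].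

Lemma disj A : A \in E1 -> A \in E2 -> False.
Proof.
move=> A1 A2; have /negP := edge_not_sub1 c A1; apply.
apply: subset_trans s12; by rewrite subsetI (edges_sub A1) (edges_sub A2).
Qed.

Lemma inter_c z : z \in V1 -> z \in V2 -> z = c.
Proof. move=> z1 z2; have := subsetP s12 z; rewrite !inE z1 z2. by move=> /(_ isT) /eqP. Qed.

Lemma edge_split A : A \in edges V e -> (A \in E1) || (A \in E2).
Proof.
move=> /edgesP [x [y [xV yV exy ->]]]; case/orP: (cross xV yV exy) => /andP [xi yi].
- by apply/orP; left; apply/edgesP; exists x, y.
- by apply/orP; right; apply/edgesP; exists x, y.
Qed.

Lemma a1E A B : a1 A B -> [&& A \in E1, B \in E1 & ladj A B].
Proof. by case: h1 => [[lo _] _] /lo. Qed.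
Lemma a2E A B : a2 A B -> [&& A \in E2, B \in E2 & ladj A B].
Proof. by case: h2 => [[lo _] _] /lo. Qed.

Lemma cross_ladj A B : A \in E2 -> B \in E1 -> c \in A -> c \in B -> ladj A B.
Proof.
move=> A2 B1 cA cB; rewrite /ladj; apply/andP; split.
- by apply/negP => /eqP AB; subst; exact: disj B1 A2.
- by apply/set0Pn; exists c; rewrite inE cA cB.
Qed.

Lemma ladj_sym (A B : {set T}) : ladj A B -> ladj B A.
Proof. by rewrite /ladj eq_sym setIC. Qed.

Lemma glue_lo : line_orientation V e ga.
Proof.
split.
- move=> A B /or4P [/a1E|/a2E|/and4P [A2 B1 cA cB]|/and5P [_ A1 B2 cA cB]].
  + by case/and3P => A1 B1 ->; rewrite !(edges_mono s1).
  + by case/and3P => A1 B1 ->; rewrite !(edges_mono s2).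
  + by rewrite (edges_mono s2 A2) (edges_mono s1 B1) cross_ladj.
  + by rewrite (edges_mono s1 A1) (edges_mono s2 B2) ladj_sym // cross_ladj.
- move=> A B AE BE lAB; rewrite /ga /=.
  have key : forall A B, A \in E1 -> B \in E2 -> ladj A B -> c \in A /\ c \in B.
    move=> A' B' A1 B2 /andP [_ /set0Pn [z]]; rewrite inE => /andP [zA zB].
    have := inter_c (subsetP (edges_sub A1) z zA) (subsetP (edges_sub B2) z zB).
    by move=> zc; subst.
  case/orP: (edge_split AE) => [A1|A2]; case/orP: (edge_split BE) => [B1|B2].
  + by case: h1 => [[_ co] _]; case/orP: (co A B A1 B1 lAB) => ->; rewrite /= ?orbT.
  + have [cA cB] := key _ _ A1 B2 lAB; by apply/orP; right; rewrite /= B2 A1 cA cB !orbT.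
  + have [cB cA] := key _ _ B1 A2 (ladj_sym lAB); by apply/orP; left; rewrite /= B1 A2 cA cB !orbT.
  + by case: h2 => [[_ co] _]; case/orP: (co A B A2 B2 lAB) => ->; rewrite /= ?orbT.
Qed.


Lemma glue_od A : A \in edges V e -> 1 + outdeg V e ga A <= fkv V e k v A.
Proof.
move=> AE; rewrite /outdeg.
case/orP: (edge_split AE) => [A1|A2].
- have od1 : 1 + outdeg V1 e a1 A <= fkv V1 e k v A by case: h1 => [_ [_ od]]; exact: od.
  have sub : [set B in edges V e | ga A B] \subset
      [set B in E1 | a1 A B] :|: [set B in E2 | (c == v) && (c \in A) && (c \in B)].
    apply/subsetP => B; rewrite inS in_setU !inS /= => /andP [BE /or4P [ab|ab|/and4P [A2 _ _ _]|/and5P [cv _ B2 cA cB]]].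
    + by have /and3P [_ -> _] := a1E ab; rewrite ab.
    + by have /and3P [A2 _ _] := a2E ab; case: (disj A1 A2).
    + by case: (disj A1 A2).
    + by rewrite B2 cv cA cB orbT.
  apply: leq_trans (_ : 1 + (outdeg V1 e a1 A + #|[set B in E2 | (c == v) && (c \in A) && (c \in B)]|) <= _).
    rewrite leq_add2l; apply: leq_trans (subset_leq_card sub) _; rewrite -cardsUI; exact: leq_addr.
  case h : ((c == v) && (c \in A)).
  + have cS := card_edges_at V2 c.
    move/andP: h => [/eqP cv cA].
    move: od1; rewrite /fkv -cv cA addnA => od1.
    apply: leq_trans (leq_add od1 cS) _; exact: deg_split.
  + have -> : [set B in E2 | false && (c \in B)] = set0 by apply/setP => B; rewrite !inE andbF.
    rewrite cards0 addn0; apply: leq_trans od1 _; rewrite /fkv; case: ifP => _ //; exact: deg_mono.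
- have od2 : 1 + outdeg V2 e a2 A <= fkv V2 e k c A by case: h2 => [_ [_ od]]; exact: od.
  have sub : [set B in edges V e | ga A B] \subset
      [set B in E2 | a2 A B] :|: [set B in E1 | (c \in A) && (c \in B)].
    apply/subsetP => B; rewrite inS in_setU !inS /= => /andP [BE /or4P [ab|ab|/and4P [_ B1 cA cB]|/and5P [_ A1 _ _ _]]].
    + by have /and3P [A1 _ _] := a1E ab; case: (disj A1 A2).
    + by have /and3P [_ -> _] := a2E ab; rewrite ab.
    + by rewrite B1 cA cB orbT.
    + by case: (disj A1 A2).
  apply: leq_trans (_ : 1 + (outdeg V2 e a2 A + #|[set B in E1 | (c \in A) && (c \in B)]|) <= _).
    rewrite leq_add2l; apply: leq_trans (subset_leq_card sub) _; rewrite -cardsUI; exact: leq_addr.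
  case cA : (c \in A).
  + have cS := card_edges_at V1 c.
    move: od2; rewrite /fkv cA addnA => od2.
    apply: leq_trans (leq_add od2 cS) _; rewrite addnC.
    apply: leq_trans (deg_split s1 s2 s12) _.
    case: ifP => vA //; by rewrite (inter_c vV1 (subsetP (edges_sub A2) v vA)).
  + have -> : [set B in E1 | false && (c \in B)] = set0 by apply/setP => B; rewrite !inE andbF.
    rewrite cards0 addn0; apply: leq_trans od2 _; rewrite /fkv cA; case: ifP => // vA.
    by move: cA; rewrite -(inter_c vV1 (subsetP (edges_sub A2) v vA)) vA.
Qed.

Lemma glue_kp : kernel_perfect V e ga.
Proof.
move=> W sW.
have [_ [kp1 _]] := h1. have [_ [kp2 _]] := h2.
have [S1 [S1W [S1i S1a]]] := kp1 (W :&: E1) (subsetIr _ _).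
pose hc := [exists B in S1, c \in B].
pose W2 := [set B in W :&: E2 | ~~ (hc && (c \in B))].
have sW2 : W2 \subset E2 by apply/subsetP => B; rewrite inS in_setI => /andP [/andP [_ ->] _].
have [S2 [S2W [S2i S2a]]] := kp2 W2 sW2.
have S1E B : B \in S1 -> (B \in W) && (B \in E1) by move/(subsetP S1W); rewrite in_setI.
have S2E B : B \in S2 -> [&& B \in W, B \in E2 & ~~ (hc && (c \in B))]
  by move/(subsetP S2W); rewrite inS in_setI andbA.
have hcI B : B \in S1 -> c \in B -> hc by move=> BS cB; apply/existsP; exists B; rewrite BS cB.
exists (S1 :|: S2); split; [|split].
- apply/subsetP => B; rewrite in_setU => /orP [/S1E|/S2E]; [by case/andP | by case/and3P].
- have fin1 X : X \in S1 -> X \in E1 by move/S1E/andP=> [].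
  have fin2 X : X \in S2 -> X \in E2 by move/S2E/and3P=> [].
  move=> A B; rewrite !in_setU /ga /= => /orP [AS|AS] /orP [BS|BS];
  [have A1 := fin1 _ AS; have B1 := fin1 _ BS
  |have A1 := fin1 _ AS; have B2 := fin2 _ BS
  |have A2 := fin2 _ AS; have B1 := fin1 _ BS
  |have A2 := fin2 _ AS; have B2 := fin2 _ BS];
  apply/negP => /or4P [ab|ab|/and4P [A2' B1' cA cB]|/and5P [_ A1' B2' cA cB]];
  try (have /and3P [hA hB _] := a1E ab); try (have /and3P [hA hB _] := a2E ab);
  try match goal with H1 : is_true (?X \in ?P), H2 : is_true (?X \in ?Q) |- _ => exact: (disj H1 H2) end.
  + by move: (S1i A B AS BS); rewrite ab.
  + by move: (S2E B BS) => /and3P [_ _]; rewrite (hcI A AS cA) cB.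
  + by move: (S2E A AS) => /and3P [_ _]; rewrite (hcI B BS cB) cA.
  + by move: (S2i A B AS BS); rewrite ab.
- move=> A; rewrite in_setD in_setU negb_or => /andP [/andP [AS1 AS2] AW].
  case/orP: (edge_split (subsetP sW A AW)) => [A1|A2].
  + have [B BS ab] : exists2 B, B \in S1 & a1 A B by apply: S1a; rewrite in_setD AS1 in_setI AW A1.
    by exists B; rewrite ?in_setU ?BS // /ga /= ab.
  + case h : (hc && (c \in A)).
    * move/andP: h => [/existsP [B /andP [BS cB]] cA].
      have /andP [_ B1] := S1E B BS.
      by exists B; rewrite ?in_setU ?BS // /ga /= A2 B1 cA cB !orbT.
    * have [B BS ab] : exists2 B, B \in S2 & a2 A B by apply: S2a; rewrite in_setD AS2 inS in_setI AW A2 h.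
      by exists B; rewrite ?in_setU ?BS ?orbT // /ga /= ab orbT.
Qed.

Lemma glue : f_edge_orientable V e (fkv V e k v).
Proof. exists ga; split; [exact: glue_lo | split; [exact: glue_kp | exact: glue_od]]. Qed.

End Glue.

Lemma orient_at k (W : {set T}) c : (forall u, deg W e u <= k) ->
  strongly_edge_orientable W e k -> exists a, f_kernel_perfect W e (fkv W e k c) a.
Proof.
move=> dk sW; case: (boolP (c \in W)) => cW; first exact: sW.
case: (boolP [exists A, A \in edges W e]) => [/existsP [A AE] | /existsPn nE]; last exact: trivial_fko.
have [x [y [_ xA _]]] := edges_two AE.
have [a ha] := sW x (subsetP (edges_sub AE) x xA).
exists a; apply: fkp_mono ha => B BE; rewrite /fkv.
have -> : (c \in B) = false.
  by apply/negP => cB; move: cW; rewrite (subsetP (edges_sub BE) c cB).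
by case: ifP.
Qed.

Lemma connect_pres (r : rel T) (P : pred T) x y :
  (forall u w, r u w -> P u -> P w) -> connect r x y -> P x -> P y.
Proof.
move=> hP /connectP [p pth ->]; elim: p x pth => //= z p IH x /andP [rxz pth] Px.
exact: IH pth (hP _ _ rxz Px).
Qed.

Lemma seo_noedge k (B : {set T}) c : B \subset [set c] -> strongly_edge_orientable B e k.
Proof.
move=> sB v _; apply: trivial_fko => A; apply/negP => AE.
by move/negP: (edge_not_sub1 c AE); apply; exact: subset_trans (edges_sub AE) sB.
Qed.

Definition hypV (k : nat) (V : {set T}) := forall B : {set T}, B \subset V -> nonsep e B ->
  (forall B' : {set T}, B \subset B' -> B' \subset V -> nonsep e B' -> B' = B) ->
  strongly_edge_orientable B e k.

Lemma connP (S : {set T}) x y : connected_in e S -> x \in S -> y \in S ->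
  connect [rel u w | [&& u \in S, w \in S & e u w]] x y.
Proof. by move=> /forall_inP /(_ x) h xS yS; move: (h xS) => /forall_inP /(_ y yS). Qed.

Lemma transfer (V Vi : {set T}) c (B : {set T}) :
  Vi \subset V ->
  (forall u w, u \in V -> w \in V -> e u w -> u \in Vi -> u != c -> w \in Vi) ->
  B \subset Vi -> (forall B' : {set T}, B \subset B' -> B' \subset Vi -> nonsep e B' -> B' = B) ->
  forall b, b \in B -> b != c ->
  forall B' : {set T}, B \subset B' -> B' \subset V -> nonsep e B' -> B' = B.
Proof.
move=> sVi sep sB maxB b bB bc B' BB' B'V nB'; apply: maxB => //.
have bB' := subsetP BB' b bB. have bVi := subsetP sB b bB.
move: (nB') => /and3P [_ conB' /forall_inP allB'].
have conD : connected_in e (B' :\ c).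
  case: (boolP (c \in B')) => cB'; first exact: allB'.
  have -> : B' :\ c = B' by apply/setP => z; rewrite !inE; case: eqP => // ->; rewrite (negPf cB').
  exact: conB'.
apply/subsetP => w wB'.
case: (eqVneq w c) => [wc | wc].
- rewrite wc in wB' *.
  have := connect_pres (P := fun u => (u \in Vi) || (c \in Vi)) _ (connP conB' bB' wB').
  rewrite orbb; apply; last by rewrite bVi.
  move=> u w' /= /and3P [uB' w'B' euw].
  case: (boolP (c \in Vi)) => cVi; rewrite ?orbT // !orbF => uVi.
  apply: (sep _ _ (subsetP B'V _ uB') (subsetP B'V _ w'B') euw uVi).
  apply/negP => /eqP uc; by rewrite -uc uVi in cVi.
- have bD : b \in B' :\ c by rewrite !inE bc bB'.
  have wD : w \in B' :\ c by rewrite !inE wc wB'.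
  apply: (connect_pres (P := fun u => u \in Vi)) _ (connP conD bD wD) bVi.
  move=> u w' /= /and3P []; rewrite !inE => /andP [uc uB'] /andP [_ w'B'] euw uVi.
  exact: sep (subsetP B'V _ uB') (subsetP B'V _ w'B') euw uVi uc.
Qed.

Lemma sub_hyp k (V Vi : {set T}) c : Vi \subset V ->
  (forall u w, u \in V -> w \in V -> e u w -> u \in Vi -> u != c -> w \in Vi) ->
  hypV k V -> hypV k Vi.
Proof.
move=> sVi sep hV B sB nB maxB.
case: (boolP [exists b in B, b != c]) => [/exists_inP [b bB bc] | /exists_inPn nb].
- apply: hV => //; [exact: subset_trans sB sVi | exact: transfer sVi sep sB maxB b bB bc].
- apply: (@seo_noedge k B c); apply/subsetP => b bB; rewrite inE; move: (nb b bB); by rewrite negbK.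
Qed.


Lemma split_step k (V V1 V2 : {set T}) c :
  (forall u, deg setT e u <= k) ->
  (forall W : {set T}, #|W| < #|V| -> hypV k W -> strongly_edge_orientable W e k) ->
  hypV k V -> V1 \subset V -> V2 \subset V -> V \subset V1 :|: V2 -> V1 :&: V2 \subset [set c] ->
  (forall x y, x \in V -> y \in V -> e x y -> (x \in V1) && (y \in V1) || (x \in V2) && (y \in V2)) ->
  #|V1| < #|V| -> #|V2| < #|V| -> strongly_edge_orientable V e k.
Proof.
move=> dk IH hV s1 s2 sU s12 cross l1 l2.
have dW W u : deg W e u <= k by apply: leq_trans (deg_mono _ (subsetT W)) (dk u).
have ic z : z \in V1 -> z \in V2 -> z = c.
  move=> z1 z2; have := subsetP s12 z; rewrite !inE z1 z2; by move/(_ isT)/eqP.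
have sep1 : forall u w, u \in V -> w \in V -> e u w -> u \in V1 -> u != c -> w \in V1.
  move=> u w uV wV euw u1 uc; case/orP: (cross u w uV wV euw) => /andP [] // u2 _.
  by rewrite (ic u u1 u2) eqxx in uc.
have sep2 : forall u w, u \in V -> w \in V -> e u w -> u \in V2 -> u != c -> w \in V2.
  move=> u w uV wV euw u2 uc; case/orP: (cross u w uV wV euw) => /andP [] // u1 _.
  by rewrite (ic u u1 u2) eqxx in uc.
have S1 := IH V1 l1 (sub_hyp s1 sep1 hV).
have S2 := IH V2 l2 (sub_hyp s2 sep2 hV).
move=> v vV; case/setUP: (subsetP sU v vV) => vi.
- have [a1 h1] := S1 v vi. have [a2 h2] := @orient_at k V2 c (dW V2) S2.
  exact: glue s1 s2 s12 cross (dW V c) vi h1 h2.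
- have [a2 h2] := S2 v vi. have [a1 h1] := @orient_at k V1 c (dW V1) S1.
  apply: glue s2 s1 _ _ (dW V c) vi h2 h1; first by rewrite setIC.
  move=> x y xV yV exy; by rewrite orbC cross.
Qed.


Lemma main k : (forall u, deg setT e u <= k) ->
  forall n (V : {set T}), #|V| <= n -> hypV k V -> strongly_edge_orientable V e k.
Proof.
move=> dk; elim=> [|n IHn] V.
  by rewrite leqn0 => /eqP /cards0_eq -> _ v; rewrite inE.
move=> lV hV.
have IH (W : {set T}) : #|W| < #|V| -> hypV k W -> strongly_edge_orientable W e k.
  move=> lW; apply: IHn; rewrite -ltnS; exact: leq_trans lW lV.
case nV : (nonsep e V).
  apply: hV => // B' VB' B'V _; apply/eqP; by rewrite eqEsubset B'V VB'.
move: nV; rewrite /nonsep.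
case: (eqVneq V set0) => [-> _ | V0 /=]; first by move=> v; rewrite inE.
case: (boolP (connected_in e V)) => conV /=.
- move/negbT/forall_inPn => [x xV /forall_inPn [y yD /forall_inPn [z zD nyz]]].
  set C := [set u in V :\ x | connect [rel u w | [&& u \in V :\ x, w \in V :\ x & e u w]] y u].
  have Ccl u w : u \in C -> w \in V -> w != x -> e u w -> w \in C.
    rewrite !inE => /andP [/andP [ux uV] cyu] wV wx euw; rewrite wx wV /=.
    apply: connect_trans cyu (connect1 _); by rewrite /= !inE ux uV wx wV euw.
  have CV : C \subset V :\ x by apply/subsetP => u; rewrite inE => /andP [].
  have xC : x \notin C by apply/negP => /(subsetP CV); rewrite !inE eqxx.
  have s1 : x |: C \subset V.
    apply/subsetP => u; rewrite in_setU1 => /orP [/eqP -> // | /(subsetP CV)].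
    by rewrite !inE => /andP [].
  apply: (@split_step k V (x |: C) (V :\: C) x dk IH hV s1 (subsetDl _ _)).
  + apply/subsetP => u uV; rewrite in_setU in_setU1 in_setD uV; by case: (u \in C); rewrite ?orbT.
  + apply/subsetP => u; rewrite in_setI in_setU1 in_setD in_set1 => /andP [/orP [//|uC] /andP [nuC _]].
    by rewrite uC in nuC.
  + move=> u w uV wV euw; rewrite !in_setU1 !in_setD uV wV /=.
    case uC: (u \in C); case wC: (w \in C); rewrite ?orbT ?andbT //=.
    * rewrite !orbF; apply/negPn/negP => wx.
      by rewrite (Ccl u w uC wV wx euw) in wC.
    * rewrite !orbF; apply/negPn/negP => ux.
      have ewu : e w u by rewrite esym.
      by rewrite (Ccl w u wC uV ux ewu) in uC.
  + apply: proper_card; apply/properP; split=> //; exists z; first by move: zD; rewrite !inE => /andP [].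
    rewrite in_setU1 negb_or; apply/andP; split; first by move: zD; rewrite !inE => /andP [].
    by rewrite inE zD.
  + apply: proper_card; apply/properP; split; first exact: subsetDl.
    exists y; first by move: yD; rewrite !inE => /andP [].
    by rewrite in_setD inE yD connect0.
- move=> _; move/forall_inPn: conV => [x xV /forall_inPn [y yV nxy]].
  set C := [set u in V | connect [rel u w | [&& u \in V, w \in V & e u w]] x u].
  have Ccl u w : u \in C -> w \in V -> e u w -> w \in C.
    rewrite !inE => /andP [uV cxu] wV euw; rewrite wV /=.
    apply: connect_trans cxu (connect1 _); by rewrite /= uV wV euw.
  have CV : C \subset V by apply/subsetP => u; rewrite inE => /andP [].
  apply: (@split_step k V C (V :\: C) x dk IH hV CV (subsetDl _ _)).
  + apply/subsetP => u uV; rewrite in_setU in_setD uV; by case: (u \in C).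
  + apply/subsetP => u; rewrite in_setI in_setD => /and3P [uC nuC _].
    by rewrite uC in nuC.
  + move=> u w uV wV euw; rewrite !in_setD uV wV /=.
    case uC: (u \in C); case wC: (w \in C) => //=.
    * by rewrite (Ccl u w uC wV euw) in wC.
    * have ewu : e w u by rewrite esym.
      by rewrite (Ccl w u wC uV ewu) in uC.
  + apply: proper_card; apply/properP; split=> //; exists y => //.
    by rewrite inE yV.
  + apply: proper_card; apply/properP; split; first exact: subsetDl.
    by exists x => //; rewrite in_setD inE xV connect0.
Qed.

End Proof.

Theorem mainTheorem12 (T : finType) (e : rel T) (k : nat) :
  simple_graph e ->
  (forall v : T, deg [set: T] e v <= k) ->
  (forall B : {set T}, is_block e B -> strongly_edge_orientable B e k) ->
  strongly_edge_orientable [set: T] e k.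
Proof.
move=> [esym eirr] dk hB.
apply: (@main T e esym eirr k dk #|[set: T]|) => //.
move=> B _ nB maxB; apply: hB; split => // B' BB' nB'; exact: maxB BB' (subsetT _) nB'.
Qed.
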